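(* Let $Q$ be a left automorphic loop, $S\le Q$, and let $g_i\in\mathrm{Mlt}_\lambda(Q)$ for $i\in I$. Set $H=\bigcap_{i\in I} g_i(S)$. Then for $x\in Q$, we have $x\in H$ if and only if $x\backslash H=\{x\backslash h : h\in H\}$ is a subloop of $Q$.
   Context: $L_x(y)=xy$; $\mathrm{Mlt}_\lambda(Q)=\langle L_x:x\in Q\rangle$; $\mathrm{Inn}_\lambda(Q)$ is the stabilizer of $1$ in $\mathrm{Mlt}_\lambda(Q)$. A loop is left automorphic if every element of $\mathrm{Inn}_\lambda(Q)$ is an automorphism of $Q$. Left division: $x\backslash y=L_x^{-1}(y)$. If $I=\emptyset$ the intersection is taken to be $Q$. *)

(* Defs.v *)
From Stdlib Require Import List.
Import ListNotations.

Record loop := Loop {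
  carrier :> Type;
  mul : carrier -> carrier -> carrier;
  ldiv : carrier -> carrier -> carrier;   (* x \ y = L_x^{-1} y *)
  rdiv : carrier -> carrier -> carrier;   (* y / x = R_x^{-1} y *)
  one : carrier;
  ldivK : forall x y, ldiv x (mul x y) = y;
  mulldK : forall x y, mul x (ldiv x y) = y;
  rdivK : forall x y, rdiv (mul y x) x = y;
  mulrdK : forall x y, mul (rdiv y x) x = y;
  mul1l : forall x, mul one x = x;
  mul1r : forall x, mul x one = x
}.

Arguments mul {Q} : rename.
Arguments ldiv {Q} : rename.
Arguments rdiv {Q} : rename.
Arguments one {Q} : rename.

Section LoopDefs.
Variable Q : loop.

Definition Lt (x : Q) : Q -> Q := fun y => mul x y.

(* Words in the generators L_x and L_x^{-1}: (true, x) stands for L_x,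
   (false, x) for L_x^{-1} = ldiv x. *)
Fixpoint eval_word (w : list (bool * Q)) : Q -> Q :=
  match w with
  | [] => fun y => y
  | (true, x) :: w' => fun y => Lt x (eval_word w' y)
  | (false, x) :: w' => fun y => ldiv x (eval_word w' y)
  end.

(* Mlt_lambda(Q) = < L_x : x in Q >, as a group of permutations of Q:
   f belongs to it iff f (extensionally) is a product of generators and
   their inverses. *)
Definition in_MltL (f : Q -> Q) : Prop :=
  exists w, forall y, f y = eval_word w y.

Definition in_InnL (f : Q -> Q) : Prop := in_MltL f /\ f one = one.

Definition is_automorphism (f : Q -> Q) : Prop :=
  (forall x y, f (mul x y) = mul (f x) (f y)) /\
  (forall x y, f x = f y -> x = y) /\
  (forall y, exists x, f x = y).

Definition left_automorphic : Prop :=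
  forall f, in_InnL f -> is_automorphism f.

Definition subloop (S : Q -> Prop) : Prop :=
  S one /\
  (forall x y, S x -> S y -> S (mul x y)) /\
  (forall x y, S x -> S y -> S (ldiv x y)) /\
  (forall x y, S x -> S y -> S (rdiv x y)).

Definition image (g : Q -> Q) (S : Q -> Prop) : Q -> Prop :=
  fun z => exists s, S s /\ z = g s.

(* Intersection of an indexed family (equals Q when I is empty). *)
Definition bigcap {I : Type} (A : I -> Q -> Prop) : Q -> Prop :=
  fun z => forall i, A i z.

Definition ldiv_set (x : Q) (H : Q -> Prop) : Q -> Prop :=
  fun z => exists h, H h /\ z = ldiv x h.

End LoopDefs.

Arguments in_MltL {Q}.
Arguments in_InnL {Q}.
Arguments is_automorphism {Q}.
Arguments subloop {Q}.
Arguments image {Q}.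
Arguments bigcap {Q I}.
Arguments ldiv_set {Q}.

(* Main.v *)
Require Import Defs.
From Stdlib Require Import List.
Import ListNotations.

Lemma eval_word_app (Q : loop) (w1 w2 : list (bool * Q)) y :
  eval_word Q (w1 ++ w2) y = eval_word Q w1 (eval_word Q w2 y).
Proof.
  induction w1 as [|[[|] a] w IH]; simpl; try reflexivity; rewrite IH; reflexivity.
Qed.

Lemma ldiv_uniq (Q : loop) (a b c : Q) : mul a c = b -> c = ldiv a b.
Proof. intros <-. now rewrite ldivK. Qed.

Lemma rdiv_uniq (Q : loop) (a b c : Q) : mul c a = b -> c = rdiv b a.
Proof. intros <-. now rewrite rdivK. Qed.

Lemma aut_image_subloop (Q : loop) (k : Q -> Q) (S : Q -> Prop) :
  is_automorphism k -> k one = one -> subloop S -> subloop (image k S).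
Proof.
  intros [hm _] h1 [S1 [Sm [Sl Sr]]].
  repeat split.
  - exists one; split; auto.
  - intros a b [s [hs ->]] [t [ht ->]]. exists (mul s t); split; auto.
  - intros a b [s [hs ->]] [t [ht ->]]. exists (ldiv s t); split; auto.
    symmetry; apply ldiv_uniq. rewrite <- hm, mulldK. reflexivity.
  - intros a b [s [hs ->]] [t [ht ->]]. exists (rdiv s t); split; auto.
    symmetry; apply rdiv_uniq. rewrite <- hm, mulrdK. reflexivity.
Qed.

Theorem lemma6p5 (Q : loop) (hQ : left_automorphic Q)
  (S : Q -> Prop) (hS : subloop S)
  (I : Type) (g : I -> Q -> Q) (hg : forall i, in_MltL (g i))
  (x : Q) :
  let H := bigcap (fun i => image (g i) S) in
  H x <-> subloop (ldiv_set x H).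
Proof.
  intros H. split.
  - intros hx.
    assert (key : forall i, subloop (fun z => exists s, S s /\ mul x z = g i s)).
    { intro i. destruct (hx i) as [s0 [hs0 e0]].
      destruct (hg i) as [w hw].
      set (k := fun t => ldiv x (g i (mul s0 t))).
      assert (k1 : k one = one).
      { unfold k. rewrite mul1r, <- e0. symmetry. apply ldiv_uniq. apply mul1r. }
      assert (ka : is_automorphism k).
      { apply hQ. split; [|exact k1].
        exists ((false, x) :: w ++ [(true, s0)]). intro y. simpl.
        rewrite eval_word_app. simpl. unfold k, Lt. rewrite hw. reflexivity. }
      assert (E : forall z, (exists s, S s /\ mul x z = g i s) <-> image k S z).
      { intro z. split.
        - intros [s [hs e]]. exists (ldiv s0 s). split.
          { destruct hS as [_ [_ [Sl _]]]; auto. }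
          unfold k. rewrite mulldK, <- e, ldivK. reflexivity.
        - intros [t [ht ->]]. exists (mul s0 t). split.
          { destruct hS as [_ [Sm _]]; auto. }
          unfold k. rewrite mulldK. reflexivity. }
      pose proof (aut_image_subloop Q k S ka k1 hS) as [T1 [Tm [Tl Tr]]].
      repeat split; intros; apply E; try apply T1;
        [apply Tm | apply Tl | apply Tr]; apply E; assumption. }
    assert (E : forall z, ldiv_set x H z <-> forall i, exists s, S s /\ mul x z = g i s).
    { intro z. split.
      - intros [h [hh ->]] i. destruct (hh i) as [s [hs e]]. exists s.
        rewrite mulldK. auto.
      - intros hz. exists (mul x z). split.
        + intro i. destruct (hz i) as [s [hs e]]. exists s; auto.
        + rewrite ldivK. reflexivity. }
    repeat split; intros; apply E; intro i; destruct (key i) as [T1 [Tm [Tl Tr]]];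
      try apply T1; [apply Tm | apply Tl | apply Tr]; apply E; assumption.
  - intros [[h [hh e]] _]. assert (h = x) as <-.
    { rewrite <- (mulldK Q x h), <- e, mul1r. reflexivity. }
    exact hh.
Qed.
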